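(* Let $m\geq 2$ and $H\in\mathbb{R}^{m\times m}$. Let $A\subset\mathbb{R}^m$ be a nonempty set with $A\neq\{0\}$, and let $f:A\to\mathbb{R}$ be defined by $f(x):=x^THx$. Then $f$ is objective if and only if there exist a nonempty set $\Gamma\subset\mathbb{R}_+$ and $\alpha\in\mathbb{R}$ such that $A=\Gamma\cdot S^{m-1}:=\{tx\mid t\in\Gamma,\ x\in S^{m-1}\}$ and $\tfrac12(H+H^T)=\alpha I_m$.
   Context: $\mathbb{R}^m$ carries the usual inner product and Euclidean norm $\|\cdot\|$, and its elements are regarded as $m\times1$ column matrices. $\mathbb{R}_+=[0,\infty)$, $S^{m-1}:=\{x\in\mathbb{R}^m\mid\|x\|=1\}$, and $I_m$ is the $m\times m$ identity matrix. $\mathcal{Q}_m:=\{Q\in\mathbb{R}^{m\times m}\mid Q^TQ=I_m,\ \det Q=1\}$. A subset $A\subset\mathbb{R}^m$ is called objective if $Qy\in A$ for all $y\in A$ and all $Q\in\mathcal{Q}_m$. A function $f:A\to\mathbb{R}$ is called objective if its domain $A$ is objective and $f(Qy)=f(y)$ for all $y\in A$ and all $Q\in\mathcal{Q}_m$. *)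

(* Defs.v *)
From HB Require Import structures.
From mathcomp Require Import all_boot all_order all_algebra.
From mathcomp Require Export classical_sets reals.
Set Implicit Arguments. Unset Strict Implicit. Unset Printing Implicit Defensive.
Import Order.TTheory GRing.Theory Num.Theory.
Local Open Scope ring_scope.
Local Open Scope classical_set_scope.

Section Defs.
Variable R : realType.
Variable m : nat.

Definition eucl_norm (x : 'cV[R]_m) : R := Num.sqrt ((x^T *m x) 0 0).

Definition sphere : set 'cV[R]_m := [set x | eucl_norm x = 1].

Definition rotation (Q : 'M[R]_m) : Prop := Q^T *m Q = 1%:M /\ \det Q = 1.

Definition objective_set (A : set 'cV[R]_m) : Prop :=
  forall Q y, rotation Q -> A y -> A (Q *m y).

(* f : A -> R objective (only values of f on A matter) *)
Definition objective_fun (A : set 'cV[R]_m) (f : 'cV[R]_m -> R) : Prop :=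
  objective_set A /\ forall Q y, rotation Q -> A y -> f (Q *m y) = f y.

Definition quad (H : 'M[R]_m) (x : 'cV[R]_m) : R := (x^T *m H *m x) 0 0.
End Defs.

(* Main.v *)
Require Import Defs.
From HB Require Import structures.
From mathcomp Require Import all_boot all_order all_algebra.
From mathcomp Require Import classical_sets reals.
From mathcomp Require Import ring lra.
From Stdlib Require Classical_Prop.
Import Order.TTheory GRing.Theory Num.Theory.
Set Implicit Arguments. Unset Strict Implicit. Unset Printing Implicit Defensive.
Local Open Scope ring_scope.

Section Helpers.
Variable R : realType.

Definition dot n (x y : 'cV[R]_n) : R := (x^T *m y) 0 0.
Definition bil n (K : 'M[R]_n) (x y : 'cV[R]_n) : R := (x^T *m K *m y) 0 0.

Lemma dotC n (x y : 'cV[R]_n) : dot x y = dot y x.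
Proof. by rewrite /dot -(trmxK (x^T *m y)) mxE trmx_mul trmxK. Qed.

Lemma dotDl n (x y z : 'cV[R]_n) : dot (x + y) z = dot x z + dot y z.
Proof. by rewrite /dot linearD mulmxDl mxE. Qed.
Lemma dotDr n (x y z : 'cV[R]_n) : dot z (x + y) = dot z x + dot z y.
Proof. by rewrite /dot mulmxDr mxE. Qed.
Lemma dotNl n (x z : 'cV[R]_n) : dot (- x) z = - dot x z.
Proof. by rewrite /dot linearN mulNmx mxE. Qed.
Lemma dotNr n (x z : 'cV[R]_n) : dot z (- x) = - dot z x.
Proof. by rewrite /dot mulmxN mxE. Qed.
Lemma dotZl n a (x z : 'cV[R]_n) : dot (a *: x) z = a * dot x z.
Proof. by rewrite /dot linearZ /= -scalemxAl mxE. Qed.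
Lemma dotZr n a (x z : 'cV[R]_n) : dot z (a *: x) = a * dot z x.
Proof. by rewrite /dot -scalemxAr mxE. Qed.

Lemma dot_sum n (x : 'cV[R]_n) : dot x x = \sum_i x i 0 ^+ 2.
Proof. by rewrite /dot mxE; apply: eq_bigr => i _; rewrite mxE expr2. Qed.

Lemma dot_ge0 n (x : 'cV[R]_n) : 0 <= dot x x.
Proof. by rewrite dot_sum; apply: sumr_ge0 => i _; apply: sqr_ge0. Qed.

Lemma dot_eq0 n (x : 'cV[R]_n) : dot x x = 0 -> x = 0.
Proof.
rewrite dot_sum => /psumr_eq0P H; apply/matrixP => i j.
rewrite (ord1 j) mxE; apply/eqP; rewrite -sqrf_eq0; apply/eqP.
by apply: H => // k _; apply: sqr_ge0.
Qed.

Lemma dot_delta n (i : 'I_n) (y : 'cV[R]_n) : dot (delta_mx i 0) y = y i 0.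
Proof. by rewrite /dot trmx_delta -rowE mxE. Qed.

Lemma bil_delta n (K : 'M[R]_n) i j : bil K (delta_mx i 0) (delta_mx j 0) = K i j.
Proof. by rewrite /bil trmx_delta -rowE -colE !mxE. Qed.

Lemma bilDl n (K : 'M[R]_n) x y z : bil K (x + y) z = bil K x z + bil K y z.
Proof. by rewrite /bil linearD !mulmxDl mxE. Qed.
Lemma bilDr n (K : 'M[R]_n) x y z : bil K z (x + y) = bil K z x + bil K z y.
Proof. by rewrite /bil mulmxDr mxE. Qed.
Lemma bilZl n (K : 'M[R]_n) a x z : bil K (a *: x) z = a * bil K x z.
Proof. by rewrite /bil linearZ /= -!scalemxAl mxE. Qed.
Lemma bilZr n (K : 'M[R]_n) a x z : bil K z (a *: x) = a * bil K z x.
Proof. by rewrite /bil -scalemxAr mxE. Qed.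
Lemma bil_tr n (K : 'M[R]_n) x y : bil K^T x y = bil K y x.
Proof. by rewrite /bil -(trmxK (y^T *m K *m x)) [in RHS]mxE !trmx_mul trmxK mulmxA. Qed.
Lemma bilKD n (K L : 'M[R]_n) x y : bil (K + L) x y = bil K x y + bil L x y.
Proof. by rewrite /bil mulmxDr mulmxDl mxE. Qed.
Lemma bilKN n (K : 'M[R]_n) x y : bil (- K) x y = - bil K x y.
Proof. by rewrite /bil mulmxN mulNmx mxE. Qed.
Lemma bil_scalar n a (x y : 'cV[R]_n) : bil a%:M x y = a * dot x y.
Proof. by rewrite /bil mul_mx_scalar -scalemxAl mxE. Qed.
Lemma quad_bil n (H : 'M[R]_n) x : quad H x = bil H x x.
Proof. by []. Qed.

Lemma det_rank1 n (u v : 'cV[R]_n) : \det (1%:M + u *m v^T) = 1 + (v^T *m u) 0 0.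
Proof.
pose L : 'M[R]_(n + 1) := block_mx 1%:M 0 v^T 1%:M.
pose M : 'M[R]_(n + 1) := block_mx (1%:M + u *m v^T) u 0 1%:M.
pose N : 'M[R]_(n + 1) := block_mx 1%:M 0 (- v^T) 1%:M.
have E : L *m (M *m N) = block_mx 1%:M u 0 (1 + (v^T *m u) 0 0)%:M.
  rewrite /L /M /N !mulmx_block !mulmx1 !mulmx0 !mul0mx !mul1mx !addr0 !add0r.
  rewrite mulmxN addrK mulmx1 subrr addrC.
  by rewrite {1}[v^T *m u]mx11_scalar raddfD.
have := congr1 determinant E.
rewrite !det_mulmx /L /M /N det_lblock det_ublock det_lblock det_ublock !det1 !det_scalar1.
by rewrite !mul1r !mulr1.
Qed.
Definition refl n (v : 'cV[R]_n) : 'M[R]_n := 1%:M - (2 / dot v v) *: (v *m v^T).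

Lemma refl_apply n (v x : 'cV[R]_n) : refl v *m x = x - (2 * dot v x / dot v v) *: v.
Proof.
rewrite /refl mulmxBl mul1mx -scalemxAl -mulmxA [v^T *m x]mx11_scalar mul_mx_scalar.
by rewrite scalerA mulrAC.
Qed.

Lemma refl_tr n (v : 'cV[R]_n) : (refl v)^T = refl v.
Proof. by rewrite /refl linearB /= trmx1 linearZ /= trmx_mul trmxK. Qed.

Lemma dot_neq0 n (v : 'cV[R]_n) : v != 0 -> dot v v != 0.
Proof. by move=> nz; apply/eqP => /dot_eq0 /eqP; rewrite (negbTE nz). Qed.

Lemma refl_v n (v : 'cV[R]_n) : v != 0 -> refl v *m v = - v.
Proof.
move=> /dot_neq0 nz; rewrite refl_apply mulrK ?unitfE //.
by rewrite -[2]/(1 + 1) scalerDl scale1r opprD addrA subrr add0r.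
Qed.

Lemma refl_sq n (v : 'cV[R]_n) : v != 0 -> refl v *m refl v = 1%:M.
Proof.
move=> nz; rewrite {2}/refl mulmxBr mulmx1 -scalemxAr mulmxA refl_v // mulNmx.
by rewrite scalerN opprK /refl subrK.
Qed.

Lemma refl_det n (v : 'cV[R]_n) : v != 0 -> \det (refl v) = -1.
Proof.
move=> /dot_neq0 nz.
have -> : refl v = 1%:M + (- (2 / dot v v) *: v) *m v^T.
  by rewrite /refl -scalemxAl scaleNr.
rewrite det_rank1 -scalemxAr mxE -/(dot v v) mulNr divfK //.
by rewrite -[2]/(1 + 1) opprD addrA subrr add0r.
Qed.

Lemma rotation_refl2 n (v w : 'cV[R]_n) : v != 0 -> w != 0 -> rotation (refl w *m refl v).
Proof.
move=> nv nw; split.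
  by rewrite trmx_mul !refl_tr mulmxA -(mulmxA (refl v)) refl_sq // mulmx1 refl_sq.
by rewrite det_mulmx !refl_det // mulrNN mulr1.
Qed.
Lemma rot_trans m (x y : 'cV[R]_m) : (2 <= m)%N -> dot x x = dot y y ->
  exists Q, rotation Q /\ Q *m x = y.
Proof.
move=> m2 hxy.
have [->|nxy] := eqVneq x y.
  exists 1%:M; split; last exact: mul1mx.
  by split; [rewrite trmx1 mulmx1 | exact: det1].
pose v := x - y.
have nv : v != 0 by rewrite subr_eq0.
pose i1 : 'I_m := Ordinal m2.
pose i0 : 'I_m := Ordinal (ltnW m2).
have [w [nw wy]] : exists w : 'cV[R]_m, w != 0 /\ dot w y = 0.
  case: (eqVneq (y i1 0) 0) => h.
    exists (delta_mx i1 0); split; last by rewrite dot_delta.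
    apply/eqP => /matrixP /(_ i1 0); rewrite !mxE !eqxx /= => /eqP.
    by rewrite oner_eq0.
  exists (y i1 0 *: delta_mx i0 0 - y i0 0 *: delta_mx i1 0); split.
    apply/eqP => /matrixP /(_ i0 0); rewrite !mxE !eqxx /=.
    by rewrite mulr1 mulr0 subr0 => /eqP; rewrite (negbTE h).
  by rewrite dotDl dotNl !dotZl !dot_delta mulrC subrr.
exists (refl w *m refl v); split; first exact: rotation_refl2.
have dvv : dot v v = 2 * dot v x.
  rewrite /v !dotDl !dotNl !dotDr !dotNr (dotC x y) hxy; ring.
rewrite -mulmxA (refl_apply v x) -dvv divff ?dot_neq0 // scale1r /v opprB addrC subrK.
by rewrite refl_apply wy mulr0 mul0r scale0r subr0.
Qed.
Lemma rot_dot m (Q : 'M[R]_m) y : rotation Q -> dot (Q *m y) (Q *m y) = dot y y.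
Proof.
by case=> hQ _; rewrite /dot trmx_mul mulmxA -(mulmxA y^T) hQ mulmx1.
Qed.

Lemma normE m (x : 'cV[R]_m) : eucl_norm x = Num.sqrt (dot x x).
Proof. by []. Qed.

Lemma sphere_dot m (u : 'cV[R]_m) : sphere u <-> dot u u = 1.
Proof.
rewrite /sphere /= normE; split => h.
  by rewrite -(sqr_sqrtr (dot_ge0 u)) h expr1n.
by rewrite h sqrtr1.
Qed.

Lemma normalize m (z : 'cV[R]_m) : z != 0 ->
  sphere ((Num.sqrt (dot z z))^-1 *: z).
Proof.
move=> nz; apply/sphere_dot; rewrite dotZl dotZr mulrA.
have hd := dot_ge0 z.
have hs : Num.sqrt (dot z z) != 0 by rewrite sqrtr_eq0 -ltNge lt_def dot_neq0.
rewrite -expr2 exprVn sqr_sqrtr // mulVf //.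
by rewrite -(sqr_sqrtr hd) sqrf_eq0.
Qed.

Lemma quad_sym m (H : 'M[R]_m) y : 2 * quad H y = bil (H + H^T) y y.
Proof. by rewrite quad_bil bilKD bil_tr mulr2n mulrDl mul1r. Qed.

Lemma nonempty T (A : set T) : A <> set0 -> exists a, A a.
Proof.
move=> hA; case: (Classical_Prop.classic (exists a, A a)) => // hn.
by exfalso; apply: hA; apply/seteqP; split => x //= Ax; apply: hn; exists x.
Qed.
End Helpers.
Unset Implicit Arguments. Set Strict Implicit.
Local Open Scope classical_set_scope.

Theorem corollary2 (R : realType) (m : nat) (H : 'M[R]_m) (A : set 'cV[R]_m) :
  (2 <= m)%N -> A <> set0 -> A <> [set 0] ->
  (objective_fun A (quad H) <->
   exists (Gamma : set R) (alpha : R),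
     [/\ Gamma <> set0, Gamma `<=` [set t | 0 <= t],
         A = [set t *: x | t in Gamma & x in @sphere R m] &
         (1 / 2 : R) *: (H + H^T) = alpha%:M]).
Proof.
move=> m2 hA hA0; split.
- case=> objA fQ.
  have [x0 [Ax0 nx0]] : exists x0, A x0 /\ x0 != 0.
    case: (Classical_Prop.classic (exists x0, A x0 /\ x0 != 0)) => // hn.
    exfalso; apply: hA0; apply/seteqP; split => x /=.
      move=> Ax; case: (eqVneq x 0) => // nz; exfalso; apply: hn; by exists x.
    move=> ->; have [a Aa] := nonempty hA.
    case: (eqVneq a 0) => [<- //|nz]; exfalso; apply: hn; by exists a.
  have reach a y : A a -> dot y y = dot a a -> A y.
    move=> Aa hy; have [Q [hQ <-]] := rot_trans m2 (esym hy); exact: objA.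
  pose d0 := dot x0 x0.
  have d0nz : d0 != 0 by apply: dot_neq0.
  have d0ge : 0 <= d0 by apply: dot_ge0.
  pose alpha := quad H x0 / d0.
  have quadE y : quad H y = alpha * dot y y.
    case: (eqVneq y 0) => [->|ny].
      by rewrite /quad /dot !mulmx0 !mxE mulr0.
    pose dy := dot y y.
    have dynz : dy != 0 by apply: dot_neq0.
    have dyge : 0 <= dy by apply: dot_ge0.
    pose s := Num.sqrt (d0 / dy).
    have ss : s * s = d0 / dy by rewrite -expr2 sqr_sqrtr // divr_ge0.
    have hz : dot (s *: y) (s *: y) = dot x0 x0.
      by rewrite dotZl dotZr mulrA ss -/dy divfK.
    have [Q [hQ hQx]] := rot_trans m2 (esym hz).
    have := fQ Q x0 hQ Ax0; rewrite hQx !quad_bil bilZl bilZr mulrA ss -!quad_bil.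
    rewrite /alpha -/dy => <-; field.
    by rewrite d0nz dynz.
  exists [set eucl_norm x | x in A], alpha; split.
  + move=> E; have : [set eucl_norm x | x in A] (eucl_norm x0) by exists x0.
    by rewrite E.
  + by move=> t [x _ <-]; rewrite /= normE sqrtr_ge0.
  + apply/seteqP; split => z /=.
      move=> Az; exists (eucl_norm z); first by exists z.
      case: (eqVneq z 0) => [ez|nz].
        exists ((Num.sqrt (dot x0 x0))^-1 *: x0); first exact: normalize.
        by rewrite ez normE /dot mulmx0 mxE sqrtr0 scale0r.
      exists ((Num.sqrt (dot z z))^-1 *: z); first exact: normalize.
      rewrite scalerA normE divff ?scale1r //.
      by rewrite sqrtr_eq0 -ltNge lt_def dot_neq0 // dot_ge0.
    move=> [t [a Aa <-] [u /sphere_dot su <-]].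
    apply: (reach a) => //.
    by rewrite dotZl dotZr su mulr1 normE -expr2 sqr_sqrtr // dot_ge0.
  + have hK : H + H^T = (2 * alpha)%:M.
      pose K := H + H^T - (2 * alpha)%:M.
      have qK y : bil K y y = 0.
        rewrite /K bilKD bilKN bil_scalar -quad_sym quadE; ring.
      have Ksym i j : K j i = K i j by rewrite /K !mxE eq_sym (addrC (H j i)).
      have K0 : K = 0.
        apply/matrixP => i j.
        suff -> : K i j = 0 by rewrite mxE.
        have := qK (delta_mx i 0 + delta_mx j 0).
        rewrite !bilDl !bilDr !bil_delta.
        have := qK (delta_mx i 0); have := qK (delta_mx j 0).
        rewrite !bil_delta (Ksym i j); lra.
      by apply/eqP; rewrite -subr_eq0; apply/eqP.
    by rewrite hK scale_scalar_mx; congr scalar_mx; field.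
- case=> Gamma [alpha [_ _ EA hS]].
  have hK : H + H^T = (2 * alpha)%:M.
    by rewrite -scale_scalar_mx -hS scalerA mulrC divfK ?scale1r // pnatr_eq0.
  have quadE y : quad H y = alpha * dot y y.
    have := quad_sym H y; rewrite hK bil_scalar => h.
    have : 2 * quad H y = 2 * (alpha * dot y y) by rewrite h mulrA.
    by move/mulfI; apply; rewrite pnatr_eq0.
  split.
    move=> Q y hQ; rewrite EA => -[t Gt [u /sphere_dot su <-]].
    exists t => //; exists (Q *m u); last by rewrite scalemxAr.
    by apply/sphere_dot; rewrite rot_dot.
  by move=> Q y hQ _; rewrite !quadE rot_dot.
Qed.
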